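(* Let $M_0>0$, $r\in(0,+\infty]$, $\varphi,\tilde\varphi\in\mathrm{Lip}_\alpha$ and $\tau_0,\tilde\tau_0\in C_+(\Omega)$ with $\|\varphi\|_{\mathrm{Lip}_\alpha}+\|\tau_0\|_\infty\le M_0$ and $\|\tilde\varphi\|_{\mathrm{Lip}_\alpha}+\|\tilde\tau_0\|_\infty\le M_0$. Let $A,\tilde A\in C((-\infty,r),C(\Omega))$ with $A=\varphi$, $\tilde A=\tilde\varphi$ on $(-\infty,0]\times\Omega$, and assume $M:=\max\{\sup_{t\in[0,r)}\|A(t,\cdot)\|_\infty,\sup_{t\in[0,r)}\|\tilde A(t,\cdot)\|_\infty\}<+\infty$. Let $\delta_0(x)=\int_{-\tau_0(x)}^0f(\varphi(s,\cdot))(x)ds$, $\tilde\delta_0(x)=\int_{-\tilde\tau_0(x)}^0f(\tilde\varphi(s,\cdot))(x)ds$, and $\bar\tau_0^\infty:=\max\{\sup_x\tau_0(x),\sup_x\tilde\tau_0(x)\}$. Then there exists a constant $L_\tau>0$ (depending only on $M_0$, $M$, $\alpha$ and $f$) such that for all $t\in[0,r)$ and $x\in\Omega$, $$|\widehat\tau(A_t,\delta_0)(x)-\widehat\tau(\tilde A_t,\tilde\delta_0)(x)|\le L_\tau\Big[\sup_{s\in[-\bar\tau_0^\infty,r)}\|A(s,\cdot)-\tilde A(s,\cdot)\|_\infty+\|\delta_0-\tilde\delta_0\|_\infty\Big].$$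
   Context: $\Omega\subset\mathbb R^n$ compact, $C(\Omega)$ with sup norm, $\alpha\ge0$ fixed. $f:C(\Omega)\to C(\Omega)$ is Lipschitz, $0<f(\phi)(x)\le M_f$ for a constant $M_f$, non-increasing for the pointwise order. $\mathrm{Lip}_\alpha$ is the space of $\phi\in C((-\infty,0],C(\Omega))$ such that $\phi_\alpha(t):=e^{-\alpha|t|}\phi(t,\cdot)$ is bounded and Lipschitz, with norm $\sup_{t\le0}\|\phi_\alpha(t)\|_\infty+\sup_{t\ne s}\|\phi_\alpha(t)-\phi_\alpha(s)\|_\infty/|t-s|$. $A_t(\theta):=A(t+\theta)$ for $\theta\le 0$. For $t\in[0,r)$, $\widehat\tau(A_t,\delta_0)(x)$ denotes the unique nonnegative number $\sigma$ with $\int_{-\sigma}^0f(A_t(s,\cdot))(x)ds=\delta_0(x)$, equivalently $\int_{t-\sigma}^tf(A(s,\cdot))(x)ds=\int_{-\tau_0(x)}^0f(\varphi(s,\cdot))(x)ds$ (and similarly for $\tilde A,\tilde\delta_0$). *)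

(* Defs.v *)
From Stdlib Require Import Reals Lra List Classical ClassicalEpsilon.
From Stdlib Require Vectors.Fin.
Open Scope R_scope.

Definition Rn (n : nat) := Fin.t n -> R.

Definition open_set {n : nat} (U : Rn n -> Prop) : Prop :=
  forall x, U x -> exists eps, 0 < eps /\
    forall y : Rn n, (forall i, Rabs (y i - x i) < eps) -> U y.

Definition compact_set {n : nat} (K : Rn n -> Prop) : Prop :=
  forall (I : Type) (U : I -> Rn n -> Prop),
    (forall i, open_set (U i)) ->
    (forall x, K x -> exists i, U i x) ->
    exists l : list I, forall x, K x -> exists i, In i l /\ U i x.

Definition Pt (n : nat) (Om : Rn n -> Prop) := { x : Rn n | Om x }.

Definition cont_on {n : nat} {Om : Rn n -> Prop} (u : Pt n Om -> R) : Prop :=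
  forall x eps, 0 < eps -> exists del, 0 < del /\
    forall y : Pt n Om, (forall i, Rabs (proj1_sig y i - proj1_sig x i) < del) ->
      Rabs (u y - u x) < eps.

Record CO (n : nat) (Om : Rn n -> Prop) := mkCO {
  cfun :> Pt n Om -> R;
  cfun_cont : cont_on cfun }.
Arguments cfun {n Om}.

(* r in (0, +oo] : None stands for +oo *)
Definition below (r : option R) (t : R) : Prop :=
  match r with Some r' => t < r' | None => True end.

(* Total Riemann integral (0 if not integrable; oriented as in Stdlib). *)
Definition Rint (g : R -> R) (a b : R) : R :=
  match excluded_middle_informative (inhabited (Riemann_integrable g a b)) with
  | left H => RiemannInt (epsilon H (fun _ => True))
  | right _ => 0
  end.

(* The unique sigma >= 0 with int_{-sigma}^0 g = d (0 if no such sigma). *)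
Definition tauhat_gen (g : R -> R) (d : R) : R :=
  match excluded_middle_informative (exists s, 0 <= s /\ Rint g (- s) 0 = d) with
  | left H => proj1_sig (constructive_indefinite_description _ H)
  | right _ => 0
  end.

Definition shift {X : Type} (A : R -> X) (t : R) : R -> X := fun th => A (t + th).

Definition tau_hat {n Om} (f : CO n Om -> CO n Om) (psi : R -> CO n Om)
  (delta : Pt n Om -> R) (x : Pt n Om) : R :=
  tauhat_gen (fun s => f (psi s) x) (delta x).

Definition delta0 {n Om} (f : CO n Om -> CO n Om) (phi : R -> CO n Om)
  (tau0 : Pt n Om -> R) (x : Pt n Om) : R :=
  Rint (fun s => f (phi s) x) (- tau0 x) 0.

Definition f_lipschitz {n Om} (f : CO n Om -> CO n Om) : Prop :=
  exists Lf, 0 <= Lf /\ forall (u v : CO n Om) c,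
    (forall y, Rabs (u y - v y) <= c) -> forall x, Rabs (f u x - f v x) <= Lf * c.
Definition f_bounded_pos {n Om} (f : CO n Om -> CO n Om) : Prop :=
  exists Mf, forall (u : CO n Om) x, 0 < f u x /\ f u x <= Mf.
Definition f_nonincreasing {n Om} (f : CO n Om -> CO n Om) : Prop :=
  forall (u v : CO n Om), (forall y, u y <= v y) -> forall x, f v x <= f u x.

Definition cont_into_CO {n Om} (dom : R -> Prop) (A : R -> CO n Om) : Prop :=
  forall t, dom t -> forall eps, 0 < eps -> exists del, 0 < del /\
    forall s, dom s -> Rabs (s - t) < del -> forall x, Rabs (A s x - A t x) <= eps.

(* phi in Lip_alpha with ||phi||_{Lip_alpha} + ||tau0||_oo <= M0, expressed
   through (least) bounds a, b, c of the three suprema. *)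
Definition lip_alpha_bound {n Om} (alpha M0 : R) (phi : R -> CO n Om)
  (tau0 : Pt n Om -> R) : Prop :=
  cont_into_CO (fun t => t <= 0) phi /\
  exists a b c, 0 <= a /\ 0 <= b /\ 0 <= c /\ a + b + c <= M0 /\
    (forall t x, t <= 0 -> Rabs (exp (- alpha * Rabs t) * phi t x) <= a) /\
    (forall t s x, t <= 0 -> s <= 0 -> t <> s ->
       Rabs (exp (- alpha * Rabs t) * phi t x - exp (- alpha * Rabs s) * phi s x)
         <= b * Rabs (t - s)) /\
    (forall x, Rabs (tau0 x) <= c).

(* Main.v *)
From Coquelicot Require Import Coquelicot.
Require Import Defs.
From Stdlib Require Import Reals Lra ClassicalEpsilon List.
Open Scope R_scope.

Lemma Rint_RInt (g : R -> R) a b : ex_RInt g a b -> Rint g a b = RInt g a b.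
Proof.
  intros H. unfold Rint.
  destruct (excluded_middle_informative _) as [Hi|Hn].
  - symmetry. apply RInt_Reals.
  - exfalso. apply Hn. constructor. now apply ex_RInt_Reals_0.
Qed.

Lemma cont_ed (F : R -> R) u :
  (forall eps, 0 < eps -> exists del, 0 < del /\
     forall v, Rabs (v - u) < del -> Rabs (F v - F u) <= eps) ->
  continuous F u.
Proof.
  intros H. apply continuity_pt_filterlim.
  intros eps Heps. destruct (H (eps/2)) as [del [Hd Hv]]; [lra|].
  exists del. split; [lra|]. intros v [_ Hv2]. simpl in *. unfold Rfunctions.R_dist in *.
  specialize (Hv v Hv2). lra.
Qed.

Lemma lip_cont (J : R -> R) (L : R) : 0 <= L ->
  (forall a b, Rabs (J a - J b) <= L * Rabs (a - b)) -> continuity J.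
Proof.
  intros HL H x eps Heps. exists (eps / (L+1)). split.
  - apply Rdiv_lt_0_compat; lra.
  - intros v [_ Hv]. simpl in *. unfold Rfunctions.R_dist in *.
    eapply Rle_lt_trans. apply H.
    apply Rle_lt_trans with (L * (eps/(L+1))).
    apply Rmult_le_compat_l; lra.
    apply Rlt_le_trans with ((L+1) * (eps/(L+1))). apply Rmult_lt_compat_r.
    apply Rdiv_lt_0_compat; lra. lra. right. field. lra.
Qed.
Lemma exF (F : R -> R) t a b : (forall u, u <= t -> continuous F u) ->
  a <= t -> b <= t -> ex_RInt F a b.
Proof.
  intros HF Ha Hb. apply (ex_RInt_continuous (V:=R_CompleteNormedModule)). intros z Hz. apply HF.
  destruct Hz as [_ Hz]. eapply Rle_trans; [exact Hz|]. apply Rmax_lub; auto.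
Qed.

Lemma RInt_bound (F : R -> R) t Mf a b : (forall u, u <= t -> continuous F u) ->
  (forall u, Rabs (F u) <= Mf) -> a <= t -> b <= t ->
  Rabs (RInt F a b) <= Mf * Rabs (b - a).
Proof.
  intros HF HM Ha Hb. destruct (Rle_or_lt a b) as [Hab|Hab].
  - rewrite Rmult_comm, (Rabs_right (b - a)) by lra. apply abs_RInt_le_const; auto.
    now apply (exF F t).
  - rewrite <- opp_RInt_swap by (now apply (exF F t)).
    unfold opp; simpl. rewrite Rabs_Ropp.
    replace (Rabs (b - a)) with (a - b) by (rewrite Rabs_left; lra).
    rewrite Rmult_comm. apply abs_RInt_le_const; auto. lra.
    now apply (exF F t).
Qed.

Lemma core_one (F : R -> R) (t tau m Mf d : R) :
  0 <= t -> 0 <= tau -> 0 < m ->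
  (forall u, u <= t -> continuous F u) ->
  (forall u, 0 < F u /\ F u <= Mf) ->
  (forall u, - tau <= u <= t -> m <= F u) ->
  d = RInt F (- tau) 0 ->
  0 <= tauhat_gen (fun s => F (t + s)) d /\
  tauhat_gen (fun s => F (t + s)) d <= t + tau /\
  RInt F (t - tauhat_gen (fun s => F (t + s)) d) t = d.
Proof.
  intros Ht Htau Hm HF HFb Hmin Hd.
  assert (HabsF : forall u, Rabs (F u) <= Mf).
  { intro u. destruct (HFb u). rewrite Rabs_right; lra. }
  assert (Hconv : forall s, 0 <= s -> Rint (fun s => F (t + s)) (- s) 0 = RInt F (t - s) t).
  { intros s Hs.
    assert (HG : ex_RInt (fun s0 => F (t + s0)) (- s) 0).
    { apply (ex_RInt_continuous (V:=R_CompleteNormedModule)). intros z Hz. apply (continuous_comp (fun s => t + s) F).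
      apply cont_ed. intros e He. exists e. split; auto. intros v Hv.
      replace (t + v - (t + z)) with (v - z) by ring. lra.
      apply HF. destruct Hz as [_ Hz]. rewrite Rmax_right in Hz by lra. lra. }
    rewrite Rint_RInt by exact HG.
    replace (t - s) with (1 * (- s) + t) by ring.
    replace t with (1 * 0 + t) at 2 by ring.
    rewrite <- RInt_comp_lin.
    apply RInt_ext. intros z _. unfold scal; simpl; unfold mult; simpl; rewrite Rmult_1_l; f_equal; ring.
    apply (exF F t); auto; lra. }
  set (T := t + tau).
  assert (HdT : d <= RInt F (t - T) t).
  { unfold T. replace (t - (t + tau)) with (- tau) by ring.
    rewrite <- (RInt_Chasles F (- tau) 0 t) by (apply (exF F t); [exact HF|lra|lra]).
    rewrite <- Hd. unfold plus; simpl.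
    assert (0 <= RInt F 0 t).
    { apply RInt_ge_0; auto. apply (exF F t); [exact HF|lra|lra]. intros x _. destruct (HFb x); lra. }
    lra. }
  assert (Hd0 : 0 <= d).
  { rewrite Hd. apply RInt_ge_0; [lra| apply (exF F t); [exact HF|lra|lra]|]. intros x _. destruct (HFb x); lra. }
  set (cl := fun s => Rmax 0 (Rmin s T)).
  set (J := fun s => RInt F (t - cl s) t).
  assert (Hcl : forall s, 0 <= cl s <= T).
  { intro s. unfold cl. split. apply Rmax_l. apply Rmax_lub. unfold T; lra. apply Rmin_r. }
  assert (Hcllip : forall a b, Rabs (cl a - cl b) <= Rabs (a - b)).
  { intros a b. unfold cl. unfold Rmax, Rmin.
    repeat destruct Rle_dec; unfold Rabs; repeat destruct Rcase_abs; lra. }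
  assert (HJc : continuity J).
  { apply (lip_cont J (Rmax Mf 0)). apply Rmax_r.
    intros a b. unfold J.
    destruct (Hcl a), (Hcl b).
    assert (E : RInt F (t - cl a) t = RInt F (t - cl a) (t - cl b) + RInt F (t - cl b) t).
    { symmetry. apply (RInt_Chasles F); apply (exF F t); [exact HF|lra|lra|exact HF|lra|lra]. }
    rewrite E. set (X := RInt F (t - cl a) (t - cl b)). set (Y := RInt F (t - cl b) t).
    assert (E2 : forall p q : R, p + q - q = p) by (intros; ring). rewrite E2. unfold X.
    eapply Rle_trans. apply (RInt_bound F t Mf); auto; lra.
    replace (t - cl b - (t - cl a)) with (- (cl b - cl a)) by ring.
    rewrite Rabs_Ropp, Rabs_minus_sym.
    apply Rle_trans with (Mf * Rabs (a - b)).
    apply Rmult_le_compat_l; auto. pose proof (HabsF 0). pose proof (Rabs_pos (F 0)). lra.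
    apply Rmult_le_compat_r. apply Rabs_pos. apply Rmax_l. }
  assert (HJ0 : J 0 = 0).
  { unfold J, cl. rewrite Rmin_left by (unfold T; lra). rewrite Rmax_left by lra.
    replace (t - 0) with t by ring. rewrite RInt_point. reflexivity. }
  assert (HJT : J T = RInt F (t - T) t).
  { unfold J, cl. rewrite Rmin_left by lra. rewrite Rmax_right by (unfold T; lra). reflexivity. }
  destruct (IVT_gen J 0 T d HJc) as [s0 [Hs0 Hs0']].
  { rewrite HJ0, HJT. rewrite Rmin_left, Rmax_right; lra. }
  rewrite Rmin_left, Rmax_right in Hs0 by (unfold T; lra).
  assert (Hex : exists s, 0 <= s /\ Rint (fun s => F (t + s)) (- s) 0 = d).
  { exists s0. split. lra. rewrite Hconv by lra. rewrite <- Hs0'. unfold J, cl.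
    rewrite Rmin_left by lra. rewrite Rmax_right by lra. reflexivity. }
  unfold tauhat_gen.
  destruct (excluded_middle_informative _) as [H|H]; [|contradiction].
  destruct (constructive_indefinite_description _ H) as [sg [Hsg1 Hsg2]]. simpl.
  rewrite Hconv in Hsg2 by exact Hsg1.
  split; [exact Hsg1|]. split; [|exact Hsg2].
  destruct (Rle_or_lt sg T) as [Hle|Hlt]; [exact Hle|exfalso].
  rewrite <- (RInt_Chasles F (t - sg) (t - T) t) in Hsg2 by (apply (exF F t); [exact HF|unfold T in *; lra|unfold T in *; lra]).
  unfold plus in Hsg2; simpl in Hsg2.
  assert (0 < RInt F (t - sg) (t - T)).
  { apply RInt_gt_0. lra. intros x _. apply HFb. intros x Hx. apply HF. unfold T in *; lra. }
  lra.
Qed.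

Lemma RInt_diff (F G : R -> R) a b : ex_RInt F a b -> ex_RInt G a b ->
  ex_RInt (fun u => G u - F u) a b /\ RInt (fun u => G u - F u) a b = RInt G a b - RInt F a b.
Proof.
  intros HFi HGi. split.
  - apply (ex_RInt_ext (fun u => minus (G u) (F u))). intros; reflexivity.
    apply (ex_RInt_minus (V:=R_NormedModule)); auto.
  - rewrite <- (RInt_ext (fun u => minus (G u) (F u))) by (intros; reflexivity).
    rewrite (RInt_minus (V:=R_CompleteNormedModule)) by auto. reflexivity.
Qed.

Lemma RInt_lb (F : R -> R) a b m : a <= b -> ex_RInt F a b ->
  (forall u, a <= u <= b -> m <= F u) -> (b - a) * m <= RInt F a b.
Proof.
  intros Hab Hi Hm.
  assert (E : RInt (fun _ => m) a b = (b - a) * m) by (rewrite RInt_const; reflexivity).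
  rewrite <- E. apply RInt_le; auto. apply ex_RInt_const. intros; apply Hm; lra.
Qed.

Lemma one_side (F G : R -> R) t sg sgt m LS d dt :
  0 < m -> 0 <= sg -> sg <= sgt ->
  (forall u, u <= t -> continuous F u) -> (forall u, u <= t -> continuous G u) ->
  (forall u, t - sgt <= u <= t -> m <= G u) ->
  (forall u, t - sg <= u <= t -> Rabs (F u - G u) <= LS) ->
  RInt F (t - sg) t = d -> RInt G (t - sgt) t = dt ->
  sgt - sg <= (dt - d + sg * LS) / m.
Proof.
  intros Hm Hsg Hle HF HG HGm Hdiff Hd Hdt.
  assert (E : RInt G (t - sgt) t = RInt G (t - sgt) (t - sg) + RInt G (t - sg) t).
  { symmetry. apply (RInt_Chasles G); apply (exF G t); [exact HG|lra|lra|exact HG|lra|lra]. }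
  assert (H1 : (t - sg - (t - sgt)) * m <= RInt G (t - sgt) (t - sg)).
  { apply RInt_lb. lra. apply (exF G t); [exact HG|lra|lra]. intros; apply HGm; lra. }
  destruct (RInt_diff F G (t - sg) t) as [Hi Heq];
    try (apply (exF _ t); [assumption|lra|lra]).
  assert (H2 : Rabs (RInt (fun u => G u - F u) (t - sg) t) <= (t - (t - sg)) * LS).
  { apply abs_RInt_le_const. lra. exact Hi. intros u Hu. rewrite Rabs_minus_sym. apply Hdiff; lra. }
  rewrite Heq in H2. pose proof (Rabs_maj2 (RInt G (t - sg) t - RInt F (t - sg) t)) as H3.
  apply Rmult_le_reg_r with m. exact Hm.
  unfold Rdiv. rewrite Rmult_assoc, Rinv_l by lra. rewrite Rmult_1_r.
  assert (E2 : forall p q r : R, p = q + r -> q = p - r) by (intros; lra).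
  apply E2 in E. rewrite E in H1. subst d dt. lra.
Qed.

Lemma core_two (F G : R -> R) t sg sgt m LS d dt B :
  0 < m -> 0 <= LS -> 0 <= sg -> 0 <= sgt ->
  (forall u, u <= t -> continuous F u) -> (forall u, u <= t -> continuous G u) ->
  (forall u, t - sg <= u <= t -> m <= F u) -> (forall u, t - sgt <= u <= t -> m <= G u) ->
  (forall u, t - sg <= u <= t -> Rabs (F u - G u) <= LS) ->
  (forall u, t - sgt <= u <= t -> Rabs (F u - G u) <= LS) ->
  RInt F (t - sg) t = d -> RInt G (t - sgt) t = dt -> d <= B -> dt <= B ->
  Rabs (sg - sgt) <= (Rabs (d - dt) + (B / m) * LS) / m.
Proof.
  intros Hm HLS Hsg Hsgt HF HG HFm HGm HD1 HD2 Hd Hdt HB1 HB2.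
  assert (Hsgb : forall s F d, 0 <= s -> (forall u, u <= t -> continuous F u) ->
     (forall u, t - s <= u <= t -> m <= F u) -> RInt F (t - s) t = d -> d <= B -> s <= B / m).
  { intros s F0 d0 Hs HF0 HF0m Hd0 HB0.
    assert ((t - (t - s)) * m <= d0).
    { rewrite <- Hd0. apply RInt_lb. lra. apply (exF F0 t); [exact HF0|lra|lra]. auto. }
    apply Rmult_le_reg_r with m. exact Hm. unfold Rdiv. rewrite Rmult_assoc, Rinv_l by lra. lra. }
  destruct (Rle_or_lt sg sgt) as [Hle|Hlt].
  - pose proof (one_side F G t sg sgt m LS d dt Hm Hsg Hle HF HG HGm HD1 Hd Hdt) as H.
    pose proof (Hsgb sg F d Hsg HF HFm Hd HB1) as Hb.
    rewrite Rabs_minus_sym, Rabs_right by lra.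
    eapply Rle_trans. exact H. unfold Rdiv. apply Rmult_le_compat_r.
    left; now apply Rinv_0_lt_compat.
    assert (sg * LS <= (B * / m) * LS) by (apply Rmult_le_compat_r; auto).
    pose proof (Rle_abs (dt - d)). rewrite Rabs_minus_sym in H1. lra.
  - assert (HD2' : forall u, t - sgt <= u <= t -> Rabs (G u - F u) <= LS).
    { intros. rewrite Rabs_minus_sym. auto. }
    pose proof (one_side G F t sgt sg m LS dt d Hm Hsgt (Rlt_le _ _ Hlt) HG HF HFm HD2' Hdt Hd) as H.
    pose proof (Hsgb sgt G dt Hsgt HG HGm Hdt HB2) as Hb.
    rewrite Rabs_right by lra.
    eapply Rle_trans. exact H. unfold Rdiv. apply Rmult_le_compat_r.
    left; now apply Rinv_0_lt_compat.
    assert (sgt * LS <= (B * / m) * LS) by (apply Rmult_le_compat_r; auto).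
    pose proof (Rle_abs (d - dt)). lra.
Qed.

Lemma fold_min_pos {I : Type} (h : I -> R) (l : list I) :
  (forall i, 0 < h i) -> 0 < fold_right Rmin 1 (map h l).
Proof.
  intros Hh. induction l as [|a l IH]; simpl. lra.
  unfold Rmin. destruct Rle_dec; auto.
Qed.

Lemma fold_min_le {I : Type} (h : I -> R) (l : list I) i :
  In i l -> fold_right Rmin 1 (map h l) <= h i.
Proof.
  induction l as [|a l IH]; simpl. tauto.
  intros [->|Hi]. apply Rmin_l. eapply Rle_trans. apply Rmin_r. auto.
Qed.

Lemma compact_min n (Om : Rn n -> Prop) (HOm : compact_set Om) (g : CO n Om) :
  (forall y, 0 < g y) -> exists m, 0 < m /\ forall y, m <= g y.
Proof.
  intros Hpos.
  assert (Hd : forall y : Pt n Om, { d | 0 < d /\ forall z : Pt n Om,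
     (forall i, Rabs (proj1_sig z i - proj1_sig y i) < d) -> Rabs (g z - g y) < g y / 2 }).
  { intro y. apply constructive_indefinite_description.
    apply (cfun_cont _ _ g). specialize (Hpos y). lra. }
  set (del := fun y => proj1_sig (Hd y)).
  set (U := fun (y : Pt n Om) (z : Rn n) => exists e, 0 < e /\ forall w : Rn n,
     (forall i, Rabs (w i - z i) < e) -> forall i, Rabs (w i - proj1_sig y i) < del y).
  destruct (HOm (Pt n Om) U) as [l Hl].
  - intros y z [e [He Hw]]. exists (e/2). split. lra.
    intros w Hw2. exists (e/2). split. lra. intros w' Hw'. apply Hw. intro i.
    specialize (Hw' i). specialize (Hw2 i).
    replace (w' i - z i) with ((w' i - w i) + (w i - z i)) by ring.
    eapply Rle_lt_trans. apply Rabs_triang. lra.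
  - intros z Hz. exists (exist _ z Hz). exists (del (exist _ z Hz)). split.
    unfold del. exact (proj1 (proj2_sig (Hd (exist _ z Hz)))).
    intros w Hw i. simpl. apply Hw.
  - exists (fold_right Rmin 1 (map (fun y => g y / 2) l)). split.
    apply fold_min_pos. intro y. specialize (Hpos y). lra.
    intro y. destruct (Hl (proj1_sig y) (proj2_sig y)) as [i [Hi [e [He Hw]]]].
    eapply Rle_trans. apply (fold_min_le _ _ i Hi).
    assert (Hb : forall k, Rabs (proj1_sig y k - proj1_sig i k) < del i).
    { apply Hw. intro k. rewrite Rminus_diag, Rabs_R0. exact He. }
    unfold del in Hb. pose proof (proj2 (proj2_sig (Hd i)) y Hb) as Hdi. apply Rabs_def2 in Hdi. lra.
Qed.

Lemma below_open r u : below r u -> exists d, 0 < d /\ forall v, Rabs (v - u) < d -> below r v.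
Proof.
  destruct r as [r'|]; simpl; intros H.
  - exists (r' - u). split. lra. intros v Hv. apply Rabs_def2 in Hv. lra.
  - exists 1. split. lra. auto.
Qed.

Lemma contF n Om (f : CO n Om -> CO n Om) Lf (HLf : 0 <= Lf)
  (HLip : forall (u v : CO n Om) c,
    (forall y, Rabs (u y - v y) <= c) -> forall x, Rabs (f u x - f v x) <= Lf * c)
  r (A : R -> CO n Om) (HA : cont_into_CO (below r) A) x u :
  below r u -> continuous (fun v => f (A v) x) u.
Proof.
  intros Hu. apply cont_ed. intros eps Heps.
  destruct (below_open r u Hu) as [d2 [Hd2 Hb]].
  destruct (HA u Hu (eps / (Lf + 1))) as [d1 [Hd1 Hc]].
  apply Rdiv_lt_0_compat; lra.
  exists (Rmin d1 d2). split. apply Rmin_glb_lt; auto.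
  intros v Hv.
  assert (Hv1 : Rabs (v - u) < d1) by (eapply Rlt_le_trans; [exact Hv| apply Rmin_l]).
  assert (Hv2 : Rabs (v - u) < d2) by (eapply Rlt_le_trans; [exact Hv| apply Rmin_r]).
  eapply Rle_trans. apply (HLip (A v) (A u) (eps / (Lf + 1))). intro y. apply Hc; auto.
  apply Rle_trans with ((Lf + 1) * (eps / (Lf + 1))).
  apply Rmult_le_compat_r. left; apply Rdiv_lt_0_compat; lra. lra.
  right. field. lra.
Qed.

Lemma phi_bound n Om (alpha M0 : R) (phi : R -> CO n Om) (tau0 : Pt n Om -> R) :
  0 <= alpha -> lip_alpha_bound alpha M0 phi tau0 ->
  (forall x, tau0 x <= M0) /\
  (forall u y x, u <= 0 -> - tau0 x <= u -> Rabs (phi u y) <= M0 * exp (alpha * M0)).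
Proof.
  intros Hal [_ [a [b [c [Ha [Hb [Hc [Habc [H1 [H2 H3]]]]]]]]]].
  split.
  - intro x. pose proof (H3 x). pose proof (Rle_abs (tau0 x)). lra.
  - intros u y x Hu Hx.
    pose proof (H3 x). pose proof (Rle_abs (tau0 x)).
    assert (Hau : Rabs u <= M0) by (rewrite Rabs_left1 by lra; lra).
    specialize (H1 u y Hu).
    replace (phi u y) with (exp (alpha * Rabs u) * (exp (- alpha * Rabs u) * phi u y)).
    2:{ rewrite <- Rmult_assoc, <- exp_plus. replace (alpha * Rabs u + - alpha * Rabs u) with 0 by ring.
        rewrite exp_0. ring. }
    rewrite Rabs_mult, (Rabs_right (exp _)) by (left; apply exp_pos).
    rewrite Rmult_comm. apply Rmult_le_compat.
    apply Rabs_pos. left; apply exp_pos. lra.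
    destruct (Rle_lt_or_eq_dec _ _ (Rmult_le_compat_l alpha _ _ Hal Hau)) as [Hlt|Heq].
    left; apply exp_increasing; auto. right; now rewrite Heq.
Qed.

Theorem lemma3p9 (n : nat) (Om : Rn n -> Prop) (HOm : compact_set Om)
  (alpha : R) (Halpha : 0 <= alpha)
  (f : CO n Om -> CO n Om)
  (Hflip : f_lipschitz f) (Hfbd : f_bounded_pos f) (Hfmon : f_nonincreasing f)
  (M0 M : R) (HM0 : 0 < M0) :
  exists Ltau, 0 < Ltau /\
  forall (r : option R) (phi phit : R -> CO n Om) (tau0 taut0 : CO n Om)
    (A At : R -> CO n Om) (taubar : R),
    (match r with Some r' => 0 < r' | None => True end) ->
    (forall x, 0 <= tau0 x) -> (forall x, 0 <= taut0 x) ->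
    lip_alpha_bound alpha M0 phi tau0 ->
    lip_alpha_bound alpha M0 phit taut0 ->
    cont_into_CO (below r) A -> cont_into_CO (below r) At ->
    (forall t x, t <= 0 -> A t x = phi t x) ->
    (forall t x, t <= 0 -> At t x = phit t x) ->
    is_lub (fun y => exists t x, 0 <= t /\ below r t /\
              (y = Rabs (A t x) \/ y = Rabs (At t x))) M ->
    is_lub (fun y => exists x, y = tau0 x \/ y = taut0 x) taubar ->
    forall t x, 0 <= t -> below r t ->
    forall S D,
      (forall s, - taubar <= s -> below r s -> forall y, Rabs (A s y - At s y) <= S) ->
      (forall y, Rabs (delta0 f phi tau0 y - delta0 f phit taut0 y) <= D) ->
      Rabs (tau_hat f (shift A t) (delta0 f phi tau0) x
            - tau_hat f (shift At t) (delta0 f phit taut0) x)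
        <= Ltau * (S + D).
Proof.
  destruct Hflip as [Lf [HLf HLip]]. destruct Hfbd as [Mf0 HMf0].
  set (Mf := Rabs Mf0).
  assert (HMf : forall u x, 0 < f u x /\ f u x <= Mf).
  { intros u x. destruct (HMf0 u x). split; auto. eapply Rle_trans; eauto. apply Rle_abs. }
  assert (HMfp : 0 <= Mf) by apply Rabs_pos.
  set (K := Rmax M (M0 * exp (alpha * M0))).
  assert (cKc : cont_on (fun _ : Pt n Om => K)).
  { intros x eps He. exists 1. split. lra. intros. rewrite Rminus_diag, Rabs_R0. exact He. }
  set (cK := mkCO n Om (fun _ => K) cKc).
  destruct (compact_min n Om HOm (f cK)) as [m [Hm Hmin]].
  { intro y. apply HMf. }
  set (q := Lf * Mf * M0 / m).
  assert (Hq : 0 <= q).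
  { unfold q. unfold Rdiv. apply Rmult_le_pos. apply Rmult_le_pos. apply Rmult_le_pos; auto. lra.
    left; now apply Rinv_0_lt_compat. }
  exists ((1 + q) / m). split.
  { apply Rdiv_lt_0_compat; lra. }
  intros r phi phit tau0 taut0 A At taubar Hr Htau0 Htaut0 Hlip Hlipt HA HAt HAphi HAtphi
    HM Htaub t x Ht Htr S D HS HD.
  assert (Hbel : forall u, u <= t -> below r u).
  { intros u Hu. destruct r; simpl in *; lra. }
  destruct (phi_bound n Om alpha M0 phi tau0 Halpha Hlip) as [Htau0M Hphib].
  destruct (phi_bound n Om alpha M0 phit taut0 Halpha Hlipt) as [Htaut0M Hphitb].
  assert (Htb1 : tau0 x <= taubar) by (apply (proj1 Htaub); exists x; auto).
  assert (Htb2 : taut0 x <= taubar) by (apply (proj1 Htaub); exists x; auto).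
  assert (Hgen : forall (B : R -> CO n Om) (ph : R -> CO n Om) (ta : CO n Om),
    cont_into_CO (below r) B -> (forall t x, t <= 0 -> B t x = ph t x) ->
    (forall u y, 0 <= u -> below r u -> Rabs (B u y) <= M) ->
    (forall x, 0 <= ta x) ->
    (forall u y x, u <= 0 -> - ta x <= u -> Rabs (ph u y) <= M0 * exp (alpha * M0)) ->
    (forall x, ta x <= M0) ->
    let F := fun u => f (B u) x in
    (forall u, u <= t -> continuous F u) /\
    (forall u, 0 < F u /\ F u <= Mf) /\
    (forall u, - ta x <= u <= t -> m <= F u) /\
    delta0 f ph ta x = RInt F (- ta x) 0 /\
    RInt F (- ta x) 0 <= Mf * M0).
  { intros B ph ta HB HBph HBM Hta Hphb HtaM F.
    assert (HFc : forall u, u <= t -> continuous F u).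
    { intros u Hu. apply (contF n Om f Lf HLf HLip r B HB x u). auto. }
    split; [exact HFc|]. split; [intro; apply HMf|]. split.
    { intros u Hu. apply Rle_trans with (f cK x). apply Hmin.
      apply Hfmon. intro y. simpl. 
      destruct (Rle_or_lt 0 u) as [H0|H0].
      - apply Rle_trans with M. eapply Rle_trans. apply Rle_abs. apply HBM; auto; apply Hbel; lra.
        apply Rmax_l.
      - rewrite HBph by lra. apply Rle_trans with (M0 * exp (alpha * M0)).
        eapply Rle_trans. apply Rle_abs. apply (Hphb u y x); lra. apply Rmax_r. }
    assert (Hex : ex_RInt F (- ta x) 0) by (apply (exF F t); [exact HFc|pose proof (Hta x); lra|lra]).
    split.
    { unfold delta0. rewrite Rint_RInt.
      apply RInt_ext. intros z Hz. rewrite Rmin_left in Hz by (pose proof (Hta x); lra).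
      rewrite Rmax_right in Hz by (pose proof (Hta x); lra).
      pose proof (HLip (B z) (ph z) 0) as HL.
      assert (Rabs (f (B z) x - f (ph z) x) <= Lf * 0).
      { apply HL. intro y. rewrite HBph by lra. rewrite Rminus_diag, Rabs_R0. lra. }
      rewrite Rmult_0_r in H. apply Rabs_le_between in H. unfold F. lra.
      apply (ex_RInt_ext F). intros z Hz. rewrite Rmin_left in Hz by (pose proof (Hta x); lra).
      rewrite Rmax_right in Hz by (pose proof (Hta x); lra).
      pose proof (HLip (B z) (ph z) 0) as HL.
      assert (Rabs (f (B z) x - f (ph z) x) <= Lf * 0).
      { apply HL. intro y. rewrite HBph by lra. rewrite Rminus_diag, Rabs_R0. lra. }
      rewrite Rmult_0_r in H. apply Rabs_le_between in H. unfold F. lra.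
      exact Hex. }
    { eapply Rle_trans. apply Rle_abs. eapply Rle_trans.
      apply (RInt_bound F t Mf); [exact HFc| |pose proof (Hta x); lra|lra].
      intro u. destruct (HMf (B u) x). unfold F. rewrite Rabs_right; lra.
      apply Rmult_le_compat_l; auto. pose proof (Hta x); pose proof (HtaM x).
      rewrite Rabs_right; lra. }
  }
  assert (HAM : forall u y, 0 <= u -> below r u -> Rabs (A u y) <= M).
  { intros u y Hu Hbu. apply (proj1 HM). exists u, y. auto. }
  assert (HAtM : forall u y, 0 <= u -> below r u -> Rabs (At u y) <= M).
  { intros u y Hu Hbu. apply (proj1 HM). exists u, y. auto. }
  destruct (Hgen A phi tau0 HA HAphi HAM Htau0 Hphib Htau0M) as [Fc [Fb [Fm [Fd FB]]]].
  destruct (Hgen At phit taut0 HAt HAtphi HAtM Htaut0 Hphitb Htaut0M) as [Gc [Gb [Gm [Gd GB]]]].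
  clear Hgen.
  set (F := fun u => f (A u) x) in *. set (G := fun u => f (At u) x) in *.
  set (d := delta0 f phi tau0 x) in *. set (dt := delta0 f phit taut0 x) in *.
  change (tau_hat f (shift A t) (delta0 f phi tau0) x) with (tauhat_gen (fun s => F (t + s)) d).
  change (tau_hat f (shift At t) (delta0 f phit taut0) x) with (tauhat_gen (fun s => G (t + s)) dt).
  destruct (core_one F t (tau0 x) m Mf d Ht (Htau0 x) Hm Fc Fb Fm Fd) as [S1 [S2 S3]].
  destruct (core_one G t (taut0 x) m Mf dt Ht (Htaut0 x) Hm Gc Gb Gm Gd) as [T1 [T2 T3]].
  set (sg := tauhat_gen (fun s => F (t + s)) d) in *.
  set (sgt := tauhat_gen (fun s => G (t + s)) dt) in *.
  assert (HS0 : 0 <= S).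
  { pose proof (HS t ltac:(pose proof (Htau0 x); lra) Htr x) as H.
    pose proof (Rabs_pos (A t x - At t x)). lra. }
  assert (HD0 : 0 <= D).
  { pose proof (HD x) as H. fold d dt in H. pose proof (Rabs_pos (d - dt)). lra. }
  assert (Hdiff : forall u, - taubar <= u <= t -> Rabs (F u - G u) <= Lf * S).
  { intros u Hu. apply HLip. intro y. apply HS. lra. apply Hbel; lra. }
  pose proof (core_two F G t sg sgt m (Lf * S) d dt (Mf * M0) Hm
    ltac:(apply Rmult_le_pos; auto) S1 T1 Fc Gc
    ltac:(intros; apply Fm; lra) ltac:(intros; apply Gm; lra)
    ltac:(intros; apply Hdiff; lra) ltac:(intros; apply Hdiff; lra)
    S3 T3 ltac:(rewrite Fd; exact FB) ltac:(rewrite Gd; exact GB)) as Hc.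
  eapply Rle_trans. exact Hc.
  assert (E : Mf * M0 / m * (Lf * S) = q * S) by (unfold q; field; lra).
  rewrite E. unfold Rdiv. rewrite (Rmult_comm (1 + q)), Rmult_assoc.
  rewrite (Rmult_comm (/ m)). apply Rmult_le_compat_r.
  left; now apply Rinv_0_lt_compat.
  pose proof (HD x) as HDx. fold d dt in HDx.
  assert (0 <= q * D) by (apply Rmult_le_pos; auto).
  lra.
Qed.
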